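(* Let $f: A \to B$ be a ring homomorphism; view right $B$-modules as right $A$-modules by restriction of scalars along $f$. Then $f$ is a ring epimorphism if and only if both of the following hold: (a) for all finitely generated right $B$-modules $M, N$ one has $\mathrm{Hom}_A(M,N) = \mathrm{Hom}_B(M,N)$ (i.e. every $A$-linear map $M \to N$ is $B$-linear); (b) for every right $B$-module $L$ and every $A$-linear map $\psi: B \to L$, the image $\mathrm{Im}\,\psi$ is contained in a finitely generated $B$-submodule of $L$.
   Context: All rings are unital. A ring homomorphism $\varphi: R \to S$ is a ring epimorphism if for any two ring homomorphisms $\varrho_1, \varrho_2: S \to T$ with $\varrho_1\varphi = \varrho_2\varphi$ one has $\varrho_1 = \varrho_2$. *)

(* Defs.v *)
From HB Require Import structures.
From mathcomp Require Import all_boot all_order all_algebra.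
Set Implicit Arguments. Unset Strict Implicit. Unset Printing Implicit Defensive.
Import GRing.Theory.
Local Open Scope ring_scope.

(* Rings are unital, possibly noncommutative (pzRingType).
   A right B-module is a left module over the converse ring B^c:
   the right action m.b is written  (b : B^c) *: m . *)

Definition ring_epi (A B : pzRingType) (f : {rmorphism A -> B}) : Prop :=
  forall (T : pzRingType) (r1 r2 : {rmorphism B -> T}),
    (forall a : A, r1 (f a) = r2 (f a)) -> forall b : B, r1 b = r2 b.

Definition A_linear (A B : pzRingType) (f : {rmorphism A -> B})
    (M N : lmodType (B^c)) (g : M -> N) : Prop :=
  (forall x y : M, g (x + y) = g x + g y) /\
  (forall (a : A) (m : M), g ((f a : B^c) *: m) = (f a : B^c) *: g m).

Definition B_linear (B : pzRingType) (M N : lmodType (B^c)) (g : M -> N) : Prop :=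
  (forall x y : M, g (x + y) = g x + g y) /\
  (forall (b : B^c) (m : M), g (b *: m) = b *: g m).

Definition in_span (B : pzRingType) (M : lmodType (B^c)) (n : nat)
    (v : 'I_n -> M) (x : M) : Prop :=
  exists c : 'I_n -> B^c, x = \sum_(i < n) c i *: v i.

Definition fin_gen (B : pzRingType) (M : lmodType (B^c)) : Prop :=
  exists (n : nat) (v : 'I_n -> M), forall x : M, in_span v x.

(* Main.v *)
Require Import Defs.
From HB Require Import structures.
From mathcomp Require Import all_boot all_order all_algebra.
From mathcomp Require Import boolp.
Set Implicit Arguments. Unset Strict Implicit. Unset Printing Implicit Defensive.
Import GRing.Theory.
Local Open Scope ring_scope.

Lemma sig_eqE (T : Type) (P : T -> bool) (x y : {z | P z}) :
  sval x = sval y -> x = y.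
Proof.
case: x y => [x px] [y py] /= E; subst; congr exist; exact: bool_irrelevance.
Qed.

Section AddEnd.
Variable V : zmodType.
Definition addp (h : V -> V) : bool := `[< forall x y, h (x + y) = h x + h y >].
Definition EndT := {h : V -> V | addp h}.
HB.instance Definition _ := gen_eqMixin EndT.
HB.instance Definition _ := gen_choiceMixin EndT.

Lemma addE (h : EndT) x y : sval h (x + y) = sval h x + sval h y.
Proof. by have /asboolP H := proj2_sig h; apply: H. Qed.

Lemma EndT_eq (h1 h2 : EndT) : (forall x, sval h1 x = sval h2 x) -> h1 = h2.
Proof. by move=> H; apply: sig_eqE; apply: funext. Qed.

Definition e_mk (h : V -> V) (H : forall x y, h (x + y) = h x + h y) : EndT :=
  exist _ h (introT (asboolP _) H).

Definition e0 : EndT := @e_mk (fun _ => 0) (fun x y => esym (addr0 0)).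
Definition eadd (h1 h2 : EndT) : EndT :=
  @e_mk (fun x => sval h1 x + sval h2 x)
   (fun x y => ltac:(by rewrite /= !addE addrACA)).
Definition eopp (h : EndT) : EndT :=
  @e_mk (fun x => - sval h x) (fun x y => ltac:(by rewrite /= !addE opprD)).
Definition e1 : EndT := @e_mk id (fun x y => erefl).
Definition emul (h1 h2 : EndT) : EndT :=
  @e_mk (fun x => sval h2 (sval h1 x)) (fun x y => ltac:(by rewrite /= !addE)).

Lemma eaddA : associative eadd.
Proof. by move=> *; apply: EndT_eq => x /=; rewrite addrA. Qed.
Lemma eaddC : commutative eadd.
Proof. by move=> *; apply: EndT_eq => x /=; rewrite addrC. Qed.
Lemma eadd0 : left_id e0 eadd.
Proof. by move=> *; apply: EndT_eq => x /=; rewrite add0r. Qed.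
Lemma eaddN : left_inverse e0 eopp eadd.
Proof. by move=> *; apply: EndT_eq => x /=; rewrite addNr. Qed.
HB.instance Definition _ := GRing.isZmodule.Build EndT eaddA eaddC eadd0 eaddN.

Lemma emulA : associative emul.
Proof. by move=> *; apply: EndT_eq. Qed.
Lemma emul1 : left_id e1 emul.
Proof. by move=> *; apply: EndT_eq. Qed.
Lemma emulr1 : right_id e1 emul.
Proof. by move=> *; apply: EndT_eq. Qed.
Lemma emulDl : left_distributive emul +%R.
Proof. by move=> a b c; apply: EndT_eq => x /=; rewrite addE. Qed.
Lemma emulDr : right_distributive emul +%R.
Proof. by move=> a b c; apply: EndT_eq => x /=. Qed.
HB.instance Definition _ := GRing.Zmodule_isPzRing.Build EndT emulA emul1 emulr1 emulDl emulDr.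

Lemma EndT_addE (h1 h2 : EndT) x : sval (h1 + h2) x = sval h1 x + sval h2 x.
Proof. by []. Qed.
Lemma EndT_mulE (h1 h2 : EndT) x : sval (h1 * h2) x = sval h2 (sval h1 x).
Proof. by []. Qed.
Lemma EndT_oneE x : sval (1 : EndT) x = x.
Proof. by []. Qed.
End AddEnd.
Section Fwd.
Variables (A B : pzRingType) (f : {rmorphism A -> B}) (M N : lmodType B^c)
  (g : M -> N) (gD : forall x y, g (x + y) = g x + g y).
Let V := (M * N)%type.

Lemma g0 : g 0 = 0.
Proof. by apply: (addIr (g 0)); rewrite -gD !add0r. Qed.
Lemma gN x : g (- x) = - g x.
Proof. by apply: (addIr (g x)); rewrite -gD !addNr g0. Qed.

Definition r2fun (b : B^c) (p : V) : V := (b *: p.1, b *: (p.2 - g p.1) + g (b *: p.1)).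

Lemma r2_add (b : B^c) (x y : V) : r2fun b (x + y) = r2fun b x + r2fun b y.
Proof.
apply: injective_projections => /=.
 by rewrite scalerDr.
rewrite !scalerDr gD opprD !scalerDr gD.
by rewrite [RHS]addrACA (addrACA (b *: x.2)).
Qed.

Definition rhofun (b : B^c) (p : V) : V := (b *: p.1, b *: p.2).
Lemma rho_add (b : B^c) (x y : V) : rhofun b (x + y) = rhofun b x + rhofun b y.
Proof. by apply: injective_projections => /=; rewrite scalerDr. Qed.

Definition rho_f (b : B) : EndT V := @e_mk V (rhofun b) (rho_add b).
Definition r2_f (b : B) : EndT V := @e_mk V (r2fun b) (r2_add b).

Lemma rho_zmod : zmod_morphism rho_f.
Proof.
move=> a b; apply: EndT_eq => p /=.
by apply: injective_projections => /=; rewrite scalerBl.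
Qed.
Lemma rho_mon : monoid_morphism rho_f.
Proof.
split.
  by apply: EndT_eq => p /=; apply: injective_projections => /=; rewrite scale1r.
move=> a b; apply: EndT_eq => p /=.
by apply: injective_projections => /=; rewrite scalerA.
Qed.
HB.instance Definition _ := GRing.isZmodMorphism.Build B (EndT V) rho_f rho_zmod.
HB.instance Definition _ := GRing.isMonoidMorphism.Build B (EndT V) rho_f rho_mon.

Lemma r2_zmod : zmod_morphism r2_f.
Proof.
move=> a b; apply: EndT_eq => p /=.
apply: injective_projections => /=; first by rewrite scalerBl.
rewrite !scalerBl gD gN opprD.
by rewrite [RHS]addrACA (addrACA ((a : B^c) *: _)).
Qed.
Lemma r2_mon : monoid_morphism r2_f.
Proof.
split.
  apply: EndT_eq => p /=; apply: injective_projections => /=; rewrite !scale1r //.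
  by rewrite subrK.
move=> a b; apply: EndT_eq => p /=.
apply: injective_projections => /=; first by rewrite scalerA.
by rewrite addrK !scalerA.
Qed.
HB.instance Definition _ := GRing.isZmodMorphism.Build B (EndT V) r2_f r2_zmod.
HB.instance Definition _ := GRing.isMonoidMorphism.Build B (EndT V) r2_f r2_mon.

Lemma epi_Blin : ring_epi f ->
  (forall (a : A) (m : M), g ((f a : B^c) *: m) = (f a : B^c) *: g m) ->
  forall (b : B^c) (m : M), g (b *: m) = b *: g m.
Proof.
move=> epi gA b m.
have E : forall a : A, rho_f (f a) = r2_f (f a).
  move=> a; apply: EndT_eq => p /=.
  apply: injective_projections => //=.
  by rewrite gA scalerBr subrK.
have /(congr1 (fun h => (sval h (m, 0)).2)) := epi _ rho_f r2_f E b.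
rewrite /= scaler0 sub0r scalerN => /eqP.
by rewrite eq_sym addrC subr_eq0 => /eqP.
Qed.
End Fwd.
Section TLmod.
Variables (B T : pzRingType) (r2 : {rmorphism B -> T}).
Definition TL (r : {rmorphism B -> T}) : Type := T.
HB.instance Definition _ := GRing.Zmodule.copy (TL r2) T.
Definition tscale (b : B^c) (t : TL r2) : TL r2 := (t : T) * r2 b.
Lemma tscaleA a b v : tscale a (tscale b v) = tscale (a * b) v.
Proof. by rewrite /tscale -mulrA -rmorphM. Qed.
Lemma tscale1 : left_id 1 tscale.
Proof. by move=> x; rewrite /tscale rmorph1 mulr1. Qed.
Lemma tscaleDr : right_distributive tscale +%R.
Proof. by move=> a x y; rewrite /tscale mulrDl. Qed.
Lemma tscaleDl v : {morph tscale^~ v: a b / a + b}.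
Proof. by move=> a b; rewrite /tscale rmorphD mulrDr. Qed.
HB.instance Definition _ := GRing.Zmodule_isLmodule.Build B^c (TL r2) tscaleA tscale1 tscaleDr tscaleDl.
End TLmod.

Section Span.
Variables (B : pzRingType) (L : lmodType B^c) (n : nat) (v : 'I_n -> L).
Definition spanp (x : L) : bool := `[< in_span v x >].
Definition SP := {x : L | spanp x}.
HB.instance Definition _ := gen_eqMixin SP.
HB.instance Definition _ := gen_choiceMixin SP.

Definition s_mk x (H : in_span v x) : SP := exist _ x (introT (asboolP _) H).
Lemma s_span (x : SP) : in_span v (sval x).
Proof. by have /asboolP := proj2_sig x. Qed.

Lemma span0 : in_span v 0.
Proof. by exists (fun _ => 0); rewrite big1 // => i _; rewrite scale0r. Qed.
Lemma spanD x y : in_span v x -> in_span v y -> in_span v (x + y).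
Proof.
move=> [c ->] [d ->]; exists (fun i => c i + d i).
by rewrite -big_split; apply: eq_bigr => i _; rewrite scalerDl.
Qed.
Lemma spanN x : in_span v x -> in_span v (- x).
Proof.
move=> [c ->]; exists (fun i => - c i).
by rewrite -sumrN; apply: eq_bigr => i _; rewrite scaleNr.
Qed.
Lemma spanZ b x : in_span v x -> in_span v (b *: x).
Proof.
move=> [c ->]; exists (fun i => b * c i).
by rewrite scaler_sumr; apply: eq_bigr => i _; rewrite scalerA.
Qed.
Lemma span_v i : in_span v (v i).
Proof.
exists (fun j => if j == i then 1 else 0).
rewrite (bigD1 i) //= eqxx scale1r big1 ?addr0 // => j /negbTE ->.
by rewrite scale0r.
Qed.

Definition s0 : SP := s_mk span0.
Definition sadd (x y : SP) : SP := s_mk (spanD (s_span x) (s_span y)).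
Definition sopp (x : SP) : SP := s_mk (spanN (s_span x)).
Definition sscale (b : B^c) (x : SP) : SP := s_mk (spanZ b (s_span x)).

Lemma saddA : associative sadd.
Proof. by move=> *; apply: sig_eqE; rewrite /= addrA. Qed.
Lemma saddC : commutative sadd.
Proof. by move=> *; apply: sig_eqE; rewrite /= addrC. Qed.
Lemma sadd0 : left_id s0 sadd.
Proof. by move=> *; apply: sig_eqE; rewrite /= add0r. Qed.
Lemma saddN : left_inverse s0 sopp sadd.
Proof. by move=> *; apply: sig_eqE; rewrite /= addNr. Qed.
HB.instance Definition _ := GRing.isZmodule.Build SP saddA saddC sadd0 saddN.
Lemma sscaleA a b x : sscale a (sscale b x) = sscale (a * b) x.
Proof. by apply: sig_eqE; rewrite /= scalerA. Qed.
Lemma sscale1 : left_id 1 sscale.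
Proof. by move=> x; apply: sig_eqE; rewrite /= scale1r. Qed.
Lemma sscaleDr : right_distributive sscale +%R.
Proof. by move=> a x y; apply: sig_eqE; rewrite /= scalerDr. Qed.
Lemma sscaleDl x : {morph sscale^~ x: a b / a + b}.
Proof. by move=> a b; apply: sig_eqE; rewrite /= scalerDl. Qed.
HB.instance Definition _ := GRing.Zmodule_isLmodule.Build B^c SP sscaleA sscale1 sscaleDr sscaleDl.

Lemma sval_sum (I : Type) (r : seq I) (F : I -> SP) :
  sval (\sum_(i <- r) F i) = \sum_(i <- r) sval (F i).
Proof. by elim: r => [|a r IH]; rewrite ?big_nil ?big_cons //= IH. Qed.

Lemma SP_fg : fin_gen SP.
Proof.
exists n, (fun i => s_mk (span_v i)) => x.
have [c Hc] := s_span x.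
exists c; apply: sig_eqE; rewrite sval_sum Hc.
by apply: eq_bigr.
Qed.
End Span.
Lemma regular_fg (B : pzRingType) : fin_gen ((B^c)^o).
Proof.
exists 1%N, (fun _ => (1 : (B^c)^o)) => x; exists (fun _ => x).
by rewrite big_ord1 /= [_ *: _]mulr1.
Qed.

Theorem theorem8 (A B : pzRingType) (f : {rmorphism A -> B}) :
  ring_epi f <->
  ((forall M N : lmodType (B^c), fin_gen M -> fin_gen N ->
      forall g : M -> N, A_linear f g -> B_linear g) /\
   (forall (L : lmodType (B^c)) (psi : (B^c)^o -> L),
      A_linear (M := (B^c)^o) f psi ->
      exists (n : nat) (v : 'I_n -> L), forall b : B, in_span v (psi b))).
Proof.
have gen : ring_epi f -> forall (M N : lmodType (B^c)) (g : M -> N),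
    A_linear f g -> B_linear g.
  move=> epi M N g [gD gA]; split => //.
  exact: (epi_Blin gD epi gA).
split.
  move=> epi; split; first by move=> M N _ _; exact: gen.
  move=> L psi /(gen epi) [_ pZ]; exists 1%N, (fun _ => psi 1) => b.
  exists (fun _ => b); rewrite big_ord1 -pZ.
  by congr psi; rewrite /= [_ *: _]mulr1.
move=> [Ha Hb] T r1 r2 E.
pose psi := fun b : (B^c)^o => (r1 b : TL r2).
have psiA : A_linear (M := (B^c)^o) f psi.
  split; first by move=> x y; rewrite /psi rmorphD.
  move=> a m; rewrite /psi /= /tscale.
  by rewrite [_ *: _]/= rmorphM E.
have [n [v Hv]] := Hb _ psi psiA.
pose g := fun b : (B^c)^o => s_mk (Hv b).
have gA : A_linear f g.
  case: psiA => pD pA; split.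
    by move=> x y; apply: sig_eqE; rewrite /= pD.
  by move=> a m; apply: sig_eqE; rewrite /= pA.
have [_ gZ] := Ha _ _ (regular_fg B) (SP_fg v) g gA.
move=> b; have := congr1 sval (gZ b 1).
rewrite /= /psi (_ : (b : B^c) *: (1 : (B^c)^o) = b); last exact: (mul1r b).
move=> ->; change ((r1 1 : T) * r2 b = r2 b).
by rewrite rmorph1 mul1r.
Qed.
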